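(* Let $k,l\ge1$ and $\lambda\in\mathbb{Y}_{k,l}$ with $\lambda_l=0$. Then there exists a partition $\mathcal{P}$ of $\mathbb{Y}_{k,l}(\lambda)$ such that every block of $\mathcal{P}$ can be written as $\{\lambda^{(1)},\dots,\lambda^{(m)}\}$ with $m\ge2$ and $\lambda^{(1)}\nearrow\lambda^{(2)}\nearrow\cdots\nearrow\lambda^{(m)}$.
   Context: $\mathbb{Y}_{k,l}=\{(\lambda_1,\dots,\lambda_l)\in\mathbb{Z}^l\mid k\ge\lambda_1\ge\cdots\ge\lambda_l\ge0\}$ (Young diagrams fitting in a $k\times l$ rectangle). For $\lambda\in\mathbb{Y}_{k,l}$, $\mathbb{Y}_{k,l}(\lambda)=\{\mu\in\mathbb{Y}_{k,l}\mid \lambda_i\le\mu_i,\ i=1,\dots,l\}$. For $\lambda,\mu\in\mathbb{Y}_{k,l}$, $\lambda\nearrow\mu$ means $\mu$ is obtained from $\lambda$ by adding one box, i.e. $\mu_j=\lambda_j+1$ for exactly one index $j$ and $\mu_i=\lambda_i$ for all $i\ne j$. *)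

(* Defs.v *)
From mathcomp Require Import all_boot.
Set Implicit Arguments. Unset Strict Implicit. Unset Printing Implicit Defensive.

(* A candidate diagram in a k x l rectangle: a function i |-> lambda_(i+1),
   i : 'I_l, with values in {0,..,k}. *)
Definition diag (k l : nat) := {ffun 'I_l -> 'I_k.+1}.

Definition young k l (lam : diag k l) : bool :=
  [forall i : 'I_l, forall j : 'I_l, (i <= j) ==> (lam j <= lam i)].

Definition Y k l : {set diag k l} := [set lam | young lam].

Definition Yabove k l (lam : diag k l) : {set diag k l} :=
  [set mu | young mu & [forall i, lam i <= mu i]].

Definition addbox k l (lam mu : diag k l) : bool :=
  [exists j : 'I_l, (nat_of_ord (mu j) == (lam j).+1) &&
     [forall i : 'I_l, (i != j) ==> (nat_of_ord (mu i) == nat_of_ord (lam i))]].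

Definition chain_block k l (B : {set diag k l}) : Prop :=
  exists (x : diag k l) (s : seq (diag k l)),
    1 <= size s /\ path (@addbox k l) x s /\ B = [set y in x :: s].

(* Main.v *)
Require Import Defs.
From mathcomp Require Import all_boot.
From mathcomp Require Import zify.

Section Aux.
Variables k l : nat.
Notation D := (diag k l).

Definition S (lam rho : D) : {set D} :=
  [set mu | young mu & [forall i, (lam i <= mu i) && (mu i <= rho i)]].

Lemma youngP (mu : D) : reflect (forall i j : 'I_l, i <= j -> mu j <= mu i) (young mu).
Proof.
apply: (iffP forallP) => [h i j ij | h i]; first by move/forallP: (h i) => /(_ j) /implyP; apply.
by apply/forallP => j; apply/implyP; apply: h.
Qed.

Lemma memS (lam rho mu : D) :
  reflect (young mu /\ forall i, lam i <= mu i <= rho i) (mu \in S lam rho).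
Proof.
rewrite inE; apply: (iffP andP) => [[y /forallP h]|[y h]]; split => //.
by apply/forallP.
Qed.

Lemma S_same (lam : D) : young lam -> S lam lam = [set lam].
Proof.
move=> yl; apply/setP => mu; rewrite in_set1; apply/memS/eqP => [[_ h]|->].
  apply/ffunP => i; apply/val_inj/eqP; rewrite eqn_leq andbC; exact: h.
by split => // i; rewrite leqnn.
Qed.

Lemma partitionU2 (P1 P2 : {set {set D}}) D1 D2 :
  partition P1 D1 -> partition P2 D2 -> [disjoint D1 & D2] ->
  partition (P1 :|: P2) (D1 :|: D2).
Proof.
move=> /and3P[/eqP c1 t1 n1] /and3P[/eqP c2 t2 n2] dis.
apply/and3P; split.
- by rewrite /cover bigcup_setU -/(cover P1) -/(cover P2) c1 c2.
- by apply: trivIsetU => //; rewrite c1 c2.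
- by rewrite inE negb_or n1 n2.
Qed.

Definition Inv (lam rho : D) (P : {set {set D}}) :=
  partition P (S lam rho) /\ exists s, [/\ path (@addbox k l) lam s,
    [set y in lam :: s] \in P, (s = [::] -> lam = rho) &
    forall B, B \in P -> B != [set y in lam :: s] -> chain_block B].


Lemma setPD (A B : {set D}) : (forall mu : D, (mu \in A) = (mu \in B)) -> A = B.
Proof. by move=> h; apply/setP => x; exact: h x. Qed.

Lemma disjPD (A B : {set D}) : (forall mu : D, mu \in A -> mu \in B -> False) -> [disjoint A & B].
Proof.
move=> h; rewrite disjoints_subset; apply/subsetP => x xA; rewrite inE.
by apply/negP => xB; exact: h x xA xB.
Qed.

Lemma setin_cons (x : D) s : [set y in x :: s] = x |: [set y in s].
Proof. by apply/setP => y; rewrite !inE. Qed.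

Lemma main (lam rho : D) : young lam -> young rho -> (forall i, lam i <= rho i) ->
  exists P, Inv lam rho P.
Proof.
move Hn: #|S lam rho| => n; elim/ltn_ind: n lam rho Hn => n IH lam rho Hn yl yr le.
have [Heq|Hne] := eqVneq lam rho.
  subst rho; exists [set [set lam]]; split.
    rewrite S_same //; apply/and3P; split.
    - by rewrite cover1.
    - exact: trivIset1.
    - by rewrite inE; apply/negP => /eqP/setP/(_ lam); rewrite !inE eqxx.
  exists [::]; split => //.
  - by rewrite inE; apply/eqP/setP => y; rewrite !inE.
  - move=> B; rewrite inE => /eqP -> /eqP; elim; apply/setP => y; rewrite !inE.
    by [].
have [i0 Hi0] : exists i, lam i < rho i.
  apply/existsP; apply: contraNT Hne => /existsPn H.
  apply/eqP/ffunP => i; apply/val_inj/eqP; rewrite eqn_leq le /= leqNgt; exact: H i.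
have [j Hj Hmin] : exists2 j : 'I_l, lam j < rho j & forall i : 'I_l, lam i < rho i -> j <= i.
  pose Pj := [pred i : 'I_l | lam i < rho i].
  have Hi0' : Pj i0 by [].
  by case: (@arg_minnP _ i0 Pj val Hi0') => j' Pj' Hm; exists j'.
have Hbef : forall i : 'I_l, i < j -> rho i <= lam i.
  by move=> i ij; rewrite leqNgt; apply/negP => /Hmin; rewrite leqNgt ij.
have ordE : forall a : 'I_l, (a : nat) = j -> a = j by move=> a h; apply: val_inj.
have Hk : (lam j).+1 < k.+1 by apply: leq_ltn_trans Hj (ltn_ord (rho j)).
pose lam' : D := [ffun i : 'I_l => if i == j then Ordinal Hk else lam i].
pose rho' : D := [ffun i : 'I_l => if i < j then rho i else if rho i < lam j then rho i else lam j].
have lam'E : forall i : 'I_l, nat_of_ord (lam' i) = if (i : nat) == j then (lam j).+1 else nat_of_ord (lam i).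
  by move=> i; rewrite ffunE val_eqE; case: ifP.
have rho'E : forall i : 'I_l, nat_of_ord (rho' i) = if i < j then nat_of_ord (rho i) else minn (rho i) (lam j).
  by move=> i; rewrite ffunE /minn; case: ifP => //; case: ifP.
move/youngP: (yl) => yl0; move/youngP: (yr) => yr0.
have yl' : young lam'.
  apply/youngP => a b ab; rewrite !lam'E.
  case: eqP => [/ordE Eb|nb]; case: eqP => [/ordE Ea|na].
  - by [].
  - have aj : a < j by move: ab; rewrite Eb; lia.
    by have := Hbef a aj; have := yr0 a j (ltnW aj); lia.
  - by rewrite Ea in ab; have := yl0 _ _ ab; lia.
  - exact: yl0.
have yr' : young rho'.
  apply/youngP => a b ab; rewrite !rho'E; have := yr0 _ _ ab.
  case: (ltnP a j) => aj; case: (ltnP b j) => bj; lia.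
have le1 : forall i, lam' i <= rho i.
  by move=> i; rewrite lam'E; case: eqP => [/ordE ->|_] //; apply: le.
have le2 : forall i, lam i <= rho' i.
  move=> i; rewrite rho'E; case: ltnP => ij; first exact: le.
  by have := yl0 _ _ ij; have := le i; lia.
have Hsplit : S lam rho = S lam' rho :|: S lam rho'.
  apply: setPD => mu; rewrite in_setU; apply/memS/orP => [[ym h]|[/memS[ym h]|/memS[ym h]]].
  - move/youngP: (ym) => ym0.
    case: (ltnP (lam j) (mu j)) => c; [left|right]; apply/memS; split => // i.
      by move: (h i); rewrite lam'E; case: eqP => [/ordE E|_]; [subst i|]; lia.
    move: (h i); rewrite rho'E; case: ltnP => ij //.
    by have := ym0 _ _ ij; lia.
  - split => // i; move: (h i); rewrite lam'E; case: eqP => [/ordE E|_]; [subst i|]; lia.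
  - split => // i; move: (h i) (le i); rewrite rho'E; case: ltnP => _; lia.
have Hdis : [disjoint S lam' rho & S lam rho'].
  apply: disjPD => mu /memS[_ h1] /memS[_ h2].
  by move: (h1 j) (h2 j); rewrite lam'E rho'E eqxx ltnn; lia.
have lamB : lam \in S lam rho' by apply/memS; split => // i; rewrite leqnn le2.
have lam'A : lam' \in S lam' rho by apply/memS; split => // i; rewrite leqnn le1.
have lamA : lam \notin S lam' rho.
  by rewrite (disjointFl Hdis lamB).
have Hcard : n = #|S lam' rho| + #|S lam rho'|.
  rewrite -Hn Hsplit -cardsUI.
  by move: Hdis; rewrite -setI_eq0 => /eqP ->; rewrite cards0 addn0.
have cA : #|S lam' rho| < n.
  by rewrite Hcard -[X in X < _]addn0 ltn_add2l; apply/card_gt0P; exists lam.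
have cB : #|S lam rho'| < n.
  by rewrite Hcard -[X in X < _]add0n ltn_add2r; apply/card_gt0P; exists lam'.
have addb : addbox lam lam'.
  apply/existsP; exists j; rewrite lam'E !eqxx /=; apply/forallP => i; apply/implyP => ij.
  by rewrite lam'E val_eqE (negbTE ij).
have [PA [pA [sA [pathA inA nilA chA]]]] := IH _ cA lam' rho erefl yl' yr le1.
have [E|Hne'] := eqVneq lam rho'.
  have SB : S lam rho' = [set lam] by rewrite -E S_same.
  set CA := [set y in lam' :: sA] in inA chA *.
  have CAsub := partitionS pA inA.
  exists ((lam |: CA) |: (PA :\ CA)); split.
    have := partitionU1 (partitionD1 pA inA) (B := lam |: CA) _ _.
    have -> : (lam |: CA) :|: (S lam' rho :\: CA) = S lam rho.
      rewrite Hsplit SB; apply/setP => x; have := subsetP CAsub x.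
      rewrite !in_setU in_setD !in_set1.
      case: (x \in CA) => [/(_ isT)->|_]; first by rewrite orbT.
      by case: (x \in S lam' rho); case: (x == lam).
    apply.
      by apply/set0Pn; exists lam; rewrite !inE eqxx.
    apply: disjPD => x; rewrite in_setU1 in_setD => /orP[/eqP->|xC] /andP[xnC xA].
      by rewrite xA in lamA.
    by rewrite xC in xnC.
  exists (lam' :: sA); split.
  - by rewrite /= addb pathA.
  - by rewrite setin_cons !inE eqxx.
  - by [].
  - move=> B; rewrite !inE => /orP[/eqP->|/andP[BC BP]] Bn.
      by move: Bn; rewrite setin_cons eqxx.
    exact: chA.
have [PB [pB [sB [pathB inB nilB chB]]]] := IH _ cB lam rho' erefl yl yr' le2.
exists (PA :|: PB); split.
  by rewrite Hsplit; apply: partitionU2.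
exists sB; split => //.
- by rewrite inE inB orbT.
- by move=> /nilB E; rewrite E eqxx in Hne'.
- move=> B; rewrite inE => /orP[BA|BB] Bn; last exact: chB.
  have [EB|BnA] := eqVneq B [set y in lam' :: sA]; last exact: chA.
  case: sA pathA inA nilA chA EB => [|y s'] pathA inA nilA chA EB.
    have E := nilA erefl.
    case/eqP: Hne'; apply/ffunP => i; apply/val_inj; rewrite /= rho'E -E lam'E.
    case: (ltngtP i j) => c.
    - reflexivity.
    - by move: (yl0 _ _ (ltnW c)) => /minn_idPl ->.
    - by rewrite (ordE _ c) minnC (minn_idPl (leqnSn _)).
  exists lam', (y :: s'); split => //.
Qed.

End Aux.

Theorem lemmaA2 (k l : nat) (hk : 1 <= k) (hl : 1 <= l)
  (lam : diag k l) (hlam : lam \in Y k l)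
  (hlast : forall i : 'I_l, i.+1 = l -> nat_of_ord (lam i) = 0) :
  exists P : {set {set diag k l}},
    partition P (Yabove lam) /\ (forall B, B \in P -> chain_block B).
Proof.
move: hlam; rewrite inE => yl.
pose top : diag k l := [ffun _ => ord_max].
have ytop : young top.
  by apply/forallP => i; apply/forallP => j; rewrite !ffunE leqnn implybT.
have letop : forall i, lam i <= top i by move=> i; rewrite ffunE -ltnS ltn_ord.
have [P [pP [s [ps inP nilP chP]]]] := @main k l lam top yl ytop letop.
have HY : Yabove lam = S k l lam top.
  apply/setP => mu; rewrite !inE; congr (_ && _); apply/eq_forallb => i.
  by rewrite ffunE leq_ord andbT.
exists P; split; first by rewrite HY.
move=> B BP; have [EB|nB] := eqVneq B [set y in lam :: s]; last exact: chP.
subst B; exists lam, s; split => //.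
case: s {ps inP chP BP} nilP => [|? ?] // /(_ erefl) E.
have i0lt : l.-1 < l by lia.
have := hlast (Ordinal i0lt); rewrite E ffunE /= => /(_ (prednK hl)); lia.
Qed.
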